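(* For all $j_1,j_2,j_3\in\tfrac12\mathbb{N}^+$, with the three tensor factors of sizes $2j_1+1,2j_2+1,2j_3+1$: \begin{align*} R^{(j_1,j_2)}_{12}(t)\widehat R^{(j_1,j_3)}_{13}\widehat R^{(j_2,j_3)}_{23}&=\widehat R^{(j_2,j_3)}_{23}\widehat R^{(j_1,j_3)}_{13}R^{(j_1,j_2)}_{12}(t),\\ R^{(j_1,j_3)}_{13}(t)\widehat R^{(j_2,j_3)}_{23}\widehat R^{(j_1,j_2)}_{12}&=\widehat R^{(j_1,j_2)}_{12}\widehat R^{(j_2,j_3)}_{23}R^{(j_1,j_3)}_{13}(t),\\ R^{(j_2,j_3)}_{23}(t)\widehat R^{(j_1,j_2)}_{12}\widehat R^{(j_1,j_3)}_{13}&=\widehat R^{(j_1,j_3)}_{13}\widehat R^{(j_1,j_2)}_{12}R^{(j_2,j_3)}_{23}(t),\\ R^{(j_1,j_2)}_{12}(t)\widehat R^{(j_2,j_3)}_{23}\widehat R^{(j_1,j_3)}_{13}&=\widehat R^{(j_1,j_3)}_{13}\widehat R^{(j_2,j_3)}_{23}R^{(j_1,j_2)}_{12}(t),\\ R^{(j_1,j_3)}_{13}(t)\widehat R^{(j_1,j_2)}_{12}\widehat R^{(j_2,j_3)}_{23}&=\widehat R^{(j_2,j_3)}_{23}\widehat R^{(j_1,j_2)}_{12}R^{(j_1,j_3)}_{13}(t),\\ R^{(j_2,j_3)}_{23}(t)\widehat R^{(j_1,j_3)}_{13}\widehat R^{(j_1,j_2)}_{12}&=\widehat R^{(j_1,j_2)}_{12}\widehat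 R^{(j_1,j_3)}_{13}R^{(j_2,j_3)}_{23}(t). \end{align*}
   Context: $\mathbb{F}$ is a field of characteristic zero in which every element has a square root; $q\in\mathbb{F}$ nonzero, not a root of unity, with fixed square root $q^{1/2}$ ($q^{k/2}:=(q^{1/2})^k$); other $(\cdot)^{1/2}$ are fixed square roots in $\mathbb{F}$. $[n]_q=\frac{q^n-q^{-n}}{q-q^{-1}}$, $c(t)=t-t^{-1}$, $\tfrac12\mathbb{N}^+=\{\tfrac12,1,\tfrac32,\dots\}$, $t$ an indeterminate, $\otimes$ Kronecker product. Leg notation: for factors $\mathbb{F}^{n_1}\otimes\mathbb{F}^{n_2}\otimes\mathbb{F}^{n_3}$, $X_{12}=X\otimes I_{n_3}$, $X_{23}=I_{n_1}\otimes X$, $X_{13}=P(X\otimes I_{n_2})P$ with $P$ the flip of factors 2,3; for non-square $Y$, $Y_{12}=Y\otimes I_{n_3}$, $Y_{23}=I_{n_1}\otimes Y$. For $j\in\tfrac12\mathbb{N}^+$: $\mathcal{E}^{(j+\frac12)}$ is $(4j+2)\times(2j+2)$ with only nonzero entries $\mathcal{E}_{(a,a)}=\big(\frac{[2j+2-a]_q}{[2j+1]_q}\big)^{1/2}$, $\mathcal{E}_{(a+2j+1,a+1)}=\big(\frac{[a]_q}{[2j+1]_q}\big)^{1/2}$ ($1\le a\le 2j+1$); $\mathcal{F}^{(j+\frac12)}$ is $(2j+2)\times(4j+2)$ with only nonzero entries $\mathcal{F}_{(a,a)}=\frac{([2j+2-a]_q[2j+1]_q)^{1/2}}{[2j+2-a]_q+[a-1]_q}$,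 $\mathcal{F}_{(a+1,a+2j+1)}=\frac{([a]_q[2j+1]_q)^{1/2}}{[2j+1-a]_q+[a]_q}$ ($1\le a\le 2j+1$). $R^{(\frac12,\frac12)}(t)$ is the $4\times4$ matrix with rows $(c(qt),0,0,0),(0,c(t),c(q),0),(0,c(q),c(t),0),(0,0,0,c(qt))$; recursively $R^{(\frac12,j+\frac12)}(t)=\mathcal{F}^{(j+\frac12)}_{23}R^{(\frac12,j)}_{13}(q^{-1/2}t)R^{(\frac12,\frac12)}_{12}(q^{j}t)\mathcal{E}^{(j+\frac12)}_{23}$ (factor sizes $2,2,2j+1$) and $R^{(j_1+\frac12,j_2)}(t)=\mathcal{F}^{(j_1+\frac12)}_{12}R^{(\frac12,j_2)}_{13}(q^{-j_1}t)R^{(j_1,j_2)}_{23}(q^{1/2}t)\mathcal{E}^{(j_1+\frac12)}_{12}$ (factor sizes $2,2j_1+1,2j_2+1$). $\widehat R^{(j_1,j_2)}=q^{2\,\mathrm{diag}(j_1,\dots,-j_1)\otimes\mathrm{diag}(j_2,\dots,-j_2)}$ (diagonal with entries $q^{2\alpha\beta}$). *)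

(* Defs.v *)
From HB Require Import structures.
From mathcomp Require Import all_boot all_order all_algebra.
From mathcomp Require Import fraction.
From mathcomp.real_closed Require Export mxtens.
Set Implicit Arguments. Unset Strict Implicit. Unset Printing Implicit Defensive.
Import Order.TTheory GRing.Theory Num.Theory.
Local Open Scope ring_scope.

(* Kronecker product from mathcomp-real-closed (row-major: index (i,k) of
   'I_m * 'I_n is i * n + k). *)
Notation "A *t B" := (tensmx A B)
  (at level 40, left associativity, format "A  *t  B") : ring_scope.

Section Legs.
Variable K : pzRingType.

Definition leg12 (n1 n2 n3 : nat) (X : 'M[K]_(n1 * n2)) : 'M[K]_(n1 * n2 * n3) :=
  X *t (1%:M : 'M[K]_n3).

Definition leg23 (n1 n2 n3 : nat) (X : 'M[K]_(n2 * n3)) : 'M[K]_(n1 * n2 * n3) :=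
  castmx (mulnA n1 n2 n3, mulnA n1 n2 n3) ((1%:M : 'M[K]_n1) *t X).

(* the flip P of factors 2 and 3:  e_a (x) e_c (x) e_b  |->  e_a (x) e_b (x) e_c,
   as a matrix from F^n1 (x) F^n3 (x) F^n2 to F^n1 (x) F^n2 (x) F^n3 *)
Definition flip23 (n1 n2 n3 : nat) : 'M[K]_(n1 * n2 * n3, n1 * n3 * n2) :=
  \matrix_(i, j)
    (let: (i12, i3) := mxtens_unindex i in
     let: (i1, i2) := mxtens_unindex i12 in
     let: (j13, j2) := mxtens_unindex j in
     let: (j1, j3) := mxtens_unindex j13 in
     ((i1 == j1) && (i2 == j2) && (i3 == j3))%:R).

Definition leg13 (n1 n2 n3 : nat) (X : 'M[K]_(n1 * n3)) : 'M[K]_(n1 * n2 * n3) :=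
  flip23 n1 n2 n3 *m (X *t (1%:M : 'M[K]_n2)) *m flip23 n1 n3 n2.

End Legs.
Arguments leg12 {K} n1 n2 n3 X.
Arguments leg23 {K} n1 n2 n3 X.
Arguments leg13 {K} n1 n2 n3 X.
Arguments flip23 {K} n1 n2 n3.

Section RMatrices.
Variable F : fieldType.
Variable qh : F.
Variable sq : F -> F.     (* the fixed choice of square roots in F *)

Definition q : F := qh ^+ 2.

Definition qnum (n : nat) : F := (q ^+ n - q ^- n) / (q - q^-1).

(* E^{(j+1/2)} for 2j+1 = N := m+2, a (2N) x (N+1) matrix.
   Entries are written with 1-based indices r = i+1 (row), c = j+1 (column):
   E_(a,a) = sqrt([N+1-a]/[N]),  E_(a+N,a+1) = sqrt([a]/[N]),  1 <= a <= N. *)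
Definition Emat (m : nat) : 'M[F]_(2 * m.+2, m.+3) :=
  let N := m.+2 in
  \matrix_(i, j)
    (let r := i.+1 in let c := j.+1 in
     if ((r <= N) && (c == r))%N then sq (qnum (N.+1 - r)%N / qnum N)
     else if ((N < r) && (c == (r - N).+1))%N then sq (qnum (r - N)%N / qnum N)
     else 0).

(* F^{(j+1/2)} for 2j+1 = N := m+2, an (N+1) x (2N) matrix:
   F_(a,a) = sqrt([N+1-a][N]) / ([N+1-a] + [a-1]),
   F_(a+1,a+N) = sqrt([a][N]) / ([N-a] + [a]),  1 <= a <= N. *)
Definition Fmat (m : nat) : 'M[F]_(m.+3, 2 * m.+2) :=
  let N := m.+2 in
  \matrix_(i, j)
    (let r := i.+1 in let c := j.+1 in
     if ((c <= N) && (r == c))%N then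
       sq (qnum (N.+1 - c)%N * qnum N) / (qnum (N.+1 - c)%N + qnum c.-1)
     else if ((N < c) && (r == (c - N).+1))%N then
       sq (qnum (c - N)%N * qnum N) / (qnum (N - (c - N))%N + qnum (c - N)%N)
     else 0).

Definition K := {fraction {poly F}}.
Definition Kc (c : F) : K := @FracField.tofrac {poly F} (c%:P).
Definition tK : K := @FracField.tofrac {poly F} 'X.

Definition cfun (x : K) : K := x - x^-1.

Definition Rbase (t : K) : 'M[K]_(2 * 2) :=
  \matrix_(i, j)
    (match nat_of_ord i, nat_of_ord j with
     | 0, 0 => cfun (Kc q * t)
     | 1, 1 => cfun t
     | 1, 2 => cfun (Kc q)
     | 2, 1 => cfun (Kc q)
     | 2, 2 => cfun t
     | 3, 3 => cfun (Kc q * t)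
     | _, _ => 0
     end).

(* Rhalf m t = R^{(1/2, j)}(t) with 2j = m+1 (so 2j+1 = m+2). *)
Fixpoint Rhalf (m : nat) (t : K) : 'M[K]_(2 * m.+2) :=
  match m return 'M[K]_(2 * m.+2) with
  | 0 => Rbase t
  | m'.+1 =>
      (* j = (m'+1)/2, factor sizes 2, 2, 2j+1 = m'+2 *)
      castmx (erefl, mulnA 2 2 m'.+2)
        ((1%:M : 'M[K]_2) *t map_mx Kc (Fmat m'))
      *m leg13 2 2 m'.+2 (Rhalf m' (Kc qh^-1 * t))
      *m leg12 2 2 m'.+2 (Rbase (Kc (qh ^+ m'.+1) * t))
      *m castmx (mulnA 2 2 m'.+2, erefl)
        ((1%:M : 'M[K]_2) *t map_mx Kc (Emat m'))
  end.

(* Rgen a b t = R^{(j1, j2)}(t) with 2 j1 = a+1, 2 j2 = b+1. *)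
Fixpoint Rgen (a b : nat) (t : K) : 'M[K]_(a.+2 * b.+2) :=
  match a return 'M[K]_(a.+2 * b.+2) with
  | 0 => Rhalf b t
  | a'.+1 =>
      (* j1 = (a'+1)/2, factor sizes 2, 2j1+1 = a'+2, 2j2+1 = b+2 *)
      (map_mx Kc (Fmat a') *t (1%:M : 'M[K]_b.+2))
      *m leg13 2 a'.+2 b.+2 (Rhalf b (Kc (qh ^+ a'.+1)^-1 * t))
      *m leg23 2 a'.+2 b.+2 (Rgen a' b (Kc qh * t))
      *m (map_mx Kc (Emat a') *t (1%:M : 'M[K]_b.+2))
  end.

(* \hat R^{(j1,j2)} = q^{2 diag(j1..-j1) (x) diag(j2..-j2)}, 2 j1 = a+1, 2 j2 = b+1:
   the diagonal entry at index (i,k) is q^{2 alpha beta} = (q^{1/2})^{4 alpha beta}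
   with alpha = j1 - i, beta = j2 - k, i.e. exponent (a+1-2i)(b+1-2k). *)
Definition Rhat (a b : nat) : 'M[K]_(a.+2 * b.+2) :=
  \matrix_(i, j)
    (let: (i1, i2) := mxtens_unindex i in
     if i == j then
       Kc (qh ^ (((a.+1)%:Z - 2 * (i1 : nat)%:Z) * ((b.+1)%:Z - 2 * (i2 : nat)%:Z)))
     else 0).

End RMatrices.

(* Main.v *)
Require Import Defs.
From HB Require Import structures.
From mathcomp Require Import all_boot all_order all_algebra.
From mathcomp Require Import fraction.
From mathcomp Require Import zify ring.
Import Order.TTheory GRing.Theory Num.Theory.
Local Open Scope ring_scope.
Set Implicit Arguments. Unset Strict Implicit.

Section Gen.
Variable R : fieldType.

Definition cons (T : Type) m n (f g : nat -> T) (M : 'M[R]_(m, n)) :=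
  forall (i : 'I_m) (j : 'I_n), M i j != 0 -> f i = g j.

Lemma cons_mul T m n p (f g h : nat -> T) (M : 'M[R]_(m, n)) (N : 'M[R]_(n, p)) :
  cons f g M -> cons g h N -> cons f h (M *m N).
Proof.
move=> cM cN i j; rewrite mxE => nz.
case: (pickP (fun k => M i k * N k j != 0)) => [k /= | all0].
  by rewrite mulf_eq0 negb_or => /andP[/cM -> /cN ->].
by case/eqP: nz; apply: big1 => k _; move/negbFE/eqP: (all0 k).
Qed.

Lemma cons_weaken T m n (f g f' g' : nat -> T) (M : 'M[R]_(m, n)) :
  (forall i : 'I_m, f i = f' i) -> (forall j : 'I_n, g j = g' j) ->
  cons f g M -> cons f' g' M.
Proof. by move=> ef eg cM i j /cM; rewrite ef eg. Qed.

Lemma cons_comp T U m n (h : T -> U) (f g : nat -> T) (M : 'M[R]_(m, n)) :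
  cons f g M -> cons (h \o f) (h \o g) M.
Proof. by move=> cM i j /cM /= ->. Qed.

Lemma cons_tens T1 T2 T3 (op : T1 -> T2 -> T3) m n p q
   (f g : nat -> T1) (f' g' : nat -> T2) (A : 'M[R]_(m, n)) (B : 'M[R]_(p, q)) :
  cons f g A -> cons f' g' B ->
  cons (fun i => op (f (i %/ p)%N) (f' (i %% p)%N))
       (fun j => op (g (j %/ q)%N) (g' (j %% q)%N)) (A *t B).
Proof.
move=> cA cB i j; rewrite mxE mulf_eq0 negb_or => /andP[/cA e1 /cB e2].
by rewrite /= in e1 e2; rewrite e1 e2.
Qed.

Lemma cons_cast T m n m' n' (e : (m = m') * (n = n')) (f g : nat -> T) (M : 'M[R]_(m, n)) :
  cons f g M -> cons f g (castmx e M).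
Proof. by move=> cM i j; rewrite castmxE => /cM. Qed.

Lemma cons_1 T n (f : nat -> T) : cons f f (1%:M : 'M[R]_n).
Proof. move=> i j; rewrite mxE; case: (i =P j) => [->//|]; by rewrite eqxx. Qed.

End Gen.

Lemma w_lt N j : (j < N)%N -> (j %/ N + j %% N = j)%N.
Proof. by move=> h; rewrite divn_small // modn_small. Qed.

Lemma w_ge N j : (N <= j)%N -> (j < 2 * N)%N -> (j %/ N + j %% N = (j - N).+1)%N.
Proof.
move=> h1 h2; have -> : j = (1 * N + (j - N))%N by lia.
have hN : (0 < N)%N by lia.
rewrite divnMDl // modnMDl divn_small; last by lia.
rewrite modn_small; lia.
Qed.

Definition w2 (n : nat) (i : nat) := (i %/ n + i %% n)%N.

Lemma Rbase_cons (F : fieldType) (qh : F) t : cons (w2 2) (w2 2) (Rbase qh t).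
Proof.
move=> [[|[|[|[|i]]]] Hi] [[|[|[|[|j]]]] Hj]; rewrite mxE //= ?eqxx //.
Qed.

Lemma Fmat_cons (F : fieldType) (qh : F) sq m : cons id (w2 m.+2) (Fmat qh sq m).
Proof.
move=> i j; rewrite mxE /=.
case: ifP => [/andP[h1 /eqP h2] _ | _].
  by rewrite /w2 w_lt //; lia.
case: ifP => [/andP[h1 /eqP h2] _ | _]; last by rewrite eqxx.
have hj := ltn_ord j; have hi := ltn_ord i; rewrite /w2 w_ge; lia.
Qed.

Lemma Emat_cons (F : fieldType) (qh : F) sq m : cons (w2 m.+2) id (Emat qh sq m).
Proof.
move=> i j; rewrite mxE /=.
case: ifP => [/andP[h1 /eqP h2] _ | _].
  by rewrite /w2 w_lt //; lia.
case: ifP => [/andP[h1 /eqP h2] _ | _]; last by rewrite eqxx.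
have hj := ltn_ord j; have hi := ltn_ord i; rewrite /w2 w_ge; lia.
Qed.

Definition c1 (n2 n3 i : nat) := (i %/ n3 %/ n2)%N.
Definition c2 (n2 n3 i : nat) := (i %/ n3 %% n2)%N.
Definition c3 (n2 n3 i : nat) := (i %% n3)%N.
Definition W3 n2 n3 i := (c1 n2 n3 i + c2 n2 n3 i + c3 n2 n3 i)%N.

Lemma ar1 n2 n3 i : (i %/ (n2 * n3) = c1 n2 n3 i)%N.
Proof. by rewrite /c1 mulnC divnMA. Qed.
Lemma ar2 n2 n3 i : ((i %% (n2 * n3)) %/ n3 = c2 n2 n3 i)%N.
Proof. by rewrite /c2 modn_divl. Qed.
Lemma ar3 n2 n3 i : ((i %% (n2 * n3)) %% n3 = c3 n2 n3 i)%N.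
Proof. by rewrite /c3 modn_dvdm // dvdn_mull. Qed.

Lemma flip_nz (R : fieldType) n1 n2 n3 (i : 'I_(n1 * n2 * n3)) (k : 'I_(n1 * n3 * n2)) :
  flip23 (K:=R) n1 n2 n3 i k != 0 ->
  [/\ c1 n2 n3 i = c1 n3 n2 k, c2 n2 n3 i = c3 n3 n2 k & c3 n2 n3 i = c2 n3 n2 k].
Proof.
rewrite mxE /=.
case E: (_ && _ && _); last by rewrite eqxx.
by move: E; rewrite -!val_eqE /= => /andP[/andP[/eqP f1 /eqP f2] /eqP f3].
Qed.

Lemma cons_map (R S : fieldType) (h : R -> S) T m n (f g : nat -> T) (M : 'M[R]_(m, n)) :
  h 0 = 0 -> cons f g M -> cons f g (map_mx h M).
Proof.
move=> h0 cM i j; rewrite mxE => nz; apply: cM; apply/eqP => e.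
by move: nz; rewrite e h0 eqxx.
Qed.

Lemma Kc0 (F : fieldType) : Kc (0 : F) = 0.
Proof. by rewrite /Kc polyC0 rmorph0. Qed.

Section Legs.
Variable R : fieldType.
Variables n1 n2 n3 : nat.

Lemma leg12_cons (X : 'M[R]_(n1 * n2)) :
  cons (w2 n2) (w2 n2) X ->
  cons (fun i => (c1 n2 n3 i + c2 n2 n3 i, c3 n2 n3 i)%N)
       (fun i => (c1 n2 n3 i + c2 n2 n3 i, c3 n2 n3 i)%N) (leg12 n1 n2 n3 X).
Proof. move=> cX; exact: (cons_tens pair cX (cons_1 id)). Qed.

Lemma leg23_cons (X : 'M[R]_(n2 * n3)) :
  cons (w2 n3) (w2 n3) X ->
  cons (fun i => (c1 n2 n3 i, c2 n2 n3 i + c3 n2 n3 i)%N)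
       (fun i => (c1 n2 n3 i, c2 n2 n3 i + c3 n2 n3 i)%N) (leg23 n1 n2 n3 X).
Proof.
move=> cX; apply: cons_cast.
apply: (cons_weaken _ _ (cons_tens pair (cons_1 id) cX)) => i;
  by rewrite /= /w2 ar1 ar2 ar3.
Qed.

Lemma leg13_cons (X : 'M[R]_(n1 * n3)) :
  cons (w2 n3) (w2 n3) X ->
  cons (fun i => (c1 n2 n3 i + c3 n2 n3 i, c2 n2 n3 i)%N)
       (fun i => (c1 n2 n3 i + c3 n2 n3 i, c2 n2 n3 i)%N) (leg13 n1 n2 n3 X).
Proof.
move=> cX; set G := (fun k => (w2 n3 (k %/ n2), k %% n2)%N).
apply: (cons_mul (g := G)).
  apply: (cons_mul (g := G)); last exact: (cons_tens pair cX (cons_1 id)).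
  move=> i j /flip_nz [e1 e2 e3]; rewrite /G /w2 /=.
  by rewrite e1 e2 e3.
move=> i j /flip_nz [e1 e2 e3]; rewrite /G /w2 /=.
by rewrite -e1 -e2 -e3.
Qed.
End Legs.

Section RC.
Variable F : fieldType.
Variables (qh : F) (sq : F -> F).

Lemma leg12_W (R : fieldType) n1 n2 n3 (X : 'M[R]_(n1 * n2)) :
  cons (w2 n2) (w2 n2) X -> cons (W3 n2 n3) (W3 n2 n3) (leg12 n1 n2 n3 X).
Proof.
move=> cX; apply: (cons_weaken _ _ (cons_comp (fun p => p.1 + p.2)%N (leg12_cons (n1:=n1) (n3:=n3) cX))) => //.
Qed.

Lemma leg13_W (R : fieldType) n1 n2 n3 (X : 'M[R]_(n1 * n3)) :
  cons (w2 n3) (w2 n3) X -> cons (W3 n2 n3) (W3 n2 n3) (leg13 n1 n2 n3 X).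
Proof.
move=> cX; apply: (cons_weaken _ _ (cons_comp (fun p => p.1 + p.2)%N (leg13_cons (n2:=n2) cX))) => i;
 by rewrite /W3 /= addnAC.
Qed.

Lemma leg23_W (R : fieldType) n1 n2 n3 (X : 'M[R]_(n2 * n3)) :
  cons (w2 n3) (w2 n3) X -> cons (W3 n2 n3) (W3 n2 n3) (leg23 n1 n2 n3 X).
Proof.
move=> cX; apply: (cons_weaken _ _ (cons_comp (fun p => p.1 + p.2)%N (leg23_cons (n1:=n1) cX))) => i;
 by rewrite /W3 /= addnA.
Qed.

Lemma Rhalf_cons m t : cons (w2 m.+2) (w2 m.+2) (Rhalf qh sq m t).
Proof.
elim: m t => [|m IH] t /=; first exact: Rbase_cons.
apply: (cons_mul (g := W3 2 m.+2)); last first.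
  apply: cons_cast.
  have H := (cons_tens addn (cons_1 (R:=K F) (n:=2) id) (cons_map (Kc0 F) (Emat_cons (qh:=qh) (sq:=sq) (m:=m)))).

  apply: (cons_weaken _ _ H) => //.
  by move=> i; rewrite /= /w2 ar1 ar2 ar3 /W3 addnA.
apply: (cons_mul (g := W3 2 m.+2)); last by apply: leg12_W; apply: Rbase_cons.
apply: (cons_mul (g := W3 2 m.+2)); last by apply: leg13_W; apply: IH.
apply: cons_cast.
apply: (cons_weaken _ _ (cons_tens addn (cons_1 id) (cons_map (Kc0 F) (Fmat_cons (qh:=qh) (sq:=sq) (m:=m))))) => //.
by move=> i; rewrite /= /w2 ar1 ar2 ar3 /W3 addnA.
Qed.

Lemma Rgen_cons a b t : cons (w2 b.+2) (w2 b.+2) (Rgen qh sq a b t).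
Proof.
elim: a t => [|a IH] t /=; first exact: Rhalf_cons.
apply: (cons_mul (g := W3 a.+2 b.+2)); last first.
  exact: (cons_tens addn (cons_map (Kc0 F) (Emat_cons (qh:=qh) (sq:=sq) (m:=a))) (cons_1 id)).
apply: (cons_mul (g := W3 a.+2 b.+2)); last by apply: leg23_W; apply: IH.
apply: (cons_mul (g := W3 a.+2 b.+2)); last by apply: leg13_W; apply: Rhalf_cons.
exact: (cons_tens addn (cons_map (Kc0 F) (Fmat_cons (qh:=qh) (sq:=sq) (m:=a))) (cons_1 id)).
Qed.
End RC.

Section Diag.
Variable R : fieldType.

Definition isdiag n (D : 'M[R]_n) (d : nat -> R) :=
  forall i j : 'I_n, D i j = (i == j)%:R * d i.

Lemma sum_delta n (F : 'I_n -> R) x : \sum_k (k == x)%:R * F k = F x.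
Proof.
rewrite (bigD1 x) //= eqxx mul1r big1 ?addr0 // => k /negbTE ->; by rewrite mul0r.
Qed.

Lemma sum_delta' n (F : 'I_n -> R) x : \sum_k (x == k)%:R * F k = F x.
Proof. by rewrite -(sum_delta F x); apply: eq_bigr => k _; rewrite eq_sym. Qed.

Lemma diag_weaken n (D : 'M[R]_n) (d d' : nat -> R) :
  isdiag D d -> (forall i : 'I_n, d i = d' i) -> isdiag D d'.
Proof. by move=> dD e i j; rewrite dD e. Qed.

Lemma diag_1 n : isdiag (1%:M : 'M[R]_n) (fun _ => 1).
Proof. by move=> i j; rewrite mxE mulr1. Qed.

Lemma diag_tens m p (A : 'M[R]_m) (B : 'M[R]_p) d e :
  isdiag A d -> isdiag B e -> isdiag (A *t B) (fun i => d (i %/ p)%N * e (i %% p)%N).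
Proof.
move=> dA dB i j; rewrite mxE dA dB /=.
rewrite -(inj_eq (can_inj (@mxtens_unindexK m p))) xpair_eqE.
case: (_ == _); case: (_ == _); by rewrite /= ?mul0r ?mul1r ?mulr0.
Qed.

Lemma diag_cast n n' (e : n = n') (D : 'M[R]_n) d :
  isdiag D d -> isdiag (castmx (e, e) D) d.
Proof. by move=> dD i j; rewrite castmxE dD /= (inj_eq (@cast_ord_inj _ _ _)). Qed.

Lemma diag_mul n (A B : 'M[R]_n) d e :
  isdiag A d -> isdiag B e -> isdiag (A *m B) (fun i => d i * e i).
Proof.
move=> dA dB i j; rewrite mxE.
under eq_bigr => k _ do rewrite dA dB -mulrA.
by rewrite sum_delta' mulrCA.
Qed.

Lemma diag_mulC n (A B : 'M[R]_n) d e :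
  isdiag A d -> isdiag B e -> A *m B = B *m A.
Proof.
move=> dA dB; apply/matrixP => i j.
by rewrite (diag_mul dA dB) (diag_mul dB dA) (mulrC (d i)).
Qed.

Lemma diag_comm n (M D : 'M[R]_n) T (f : nat -> T) d :
  cons f f M -> isdiag D d -> (forall i j : 'I_n, f i = f j -> d i = d j) ->
  M *m D = D *m M.
Proof.
move=> cM dD hd; apply/matrixP => i j; rewrite !mxE.
under eq_bigr => k _ do rewrite dD mulrCA.
rewrite sum_delta.
under eq_bigr => k _ do rewrite dD -mulrA.
rewrite sum_delta'.
have [->|nz] := eqVneq (M i j) 0; first by rewrite mulr0 mul0r.
by rewrite (hd _ _ (cM _ _ nz)) mulrC.
Qed.
End Diag.



Definition sig n1 n2 n3 (i : 'I_(n1 * n2 * n3)) : 'I_(n1 * n3 * n2) :=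
  mxtens_index (mxtens_index ((mxtens_unindex (mxtens_unindex i).1).1, (mxtens_unindex i).2),
                (mxtens_unindex (mxtens_unindex i).1).2).

Definition sig_nat n2 n3 (i : nat) := (((i %/ n3 %/ n2) * n3 + i %% n3) * n2 + i %/ n3 %% n2)%N.

Lemma sig_val n1 n2 n3 (i : 'I_(n1 * n2 * n3)) : val (sig i) = sig_nat n2 n3 i.
Proof. by []. Qed.

Lemma sigK n1 n2 n3 : cancel (@sig n1 n2 n3) (@sig n1 n3 n2).
Proof.
move=> i; rewrite /sig !mxtens_indexK /=.
by apply: val_inj; rewrite /= -!divn_eq.
Qed.

Lemma flipE (R : fieldType) n1 n2 n3 (i : 'I_(n1 * n2 * n3)) k : flip23 (K:=R) n1 n2 n3 i k = (k == sig i)%:R.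
Proof.
rewrite mxE /=; congr (_ %:R).
rewrite -(inj_eq (can_inj (@mxtens_unindexK _ _))) /sig mxtens_indexK xpair_eqE.
rewrite -(inj_eq (can_inj (@mxtens_unindexK _ _))) mxtens_indexK xpair_eqE /=.
rewrite -!val_eqE /=.
by rewrite (eq_sym (k %/ n2 %/ n3)%N) (eq_sym (k %/ n2 %% n3)%N) (eq_sym (k %% n2)%N) andbAC.
Qed.

Section L13.
Variable R : fieldType.
Variables n1 n2 n3 : nat.

Lemma leg13E (X : 'M[R]_(n1 * n3)) i j :
  leg13 n1 n2 n3 X i j = (X *t (1%:M : 'M_n2)) (sig i) (sig j).
Proof.
rewrite /leg13 mxE.
under eq_bigr => l _ do rewrite mxE flipE.
under eq_bigr => l _ do under eq_bigr => k _ do rewrite flipE.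
under eq_bigr => l _ do rewrite sum_delta.
have E l : (j == sig l) = (sig j == l).
  by rewrite -(inj_eq (can_inj (@sigK n1 n3 n2))) sigK.
under eq_bigr => l _ do rewrite E mulrC.
by rewrite sum_delta'.
Qed.

Lemma diag_leg13 (X : 'M[R]_(n1 * n3)) e :
  isdiag (X *t (1%:M : 'M_n2)) e -> isdiag (leg13 n1 n2 n3 X) (fun i => e (sig_nat n2 n3 i)).
Proof.
move=> dX i j; rewrite leg13E dX (inj_eq (can_inj (@sigK _ _ _))).
by rewrite sig_val.
Qed.
End L13.

Section Fin.
Variable F : fieldType.
Variable qh : F.
Hypothesis qh_neq0 : qh != 0.

Definition dd (x : int) : K F := Kc (qh ^ x).

Lemma ddM x y : dd x * dd y = dd (x + y).
Proof. by rewrite /dd /Kc -rmorphM -polyCM expfzDr. Qed.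

Definition dh a b (k : nat) : K F :=
  dd (((a.+1)%:Z - 2 * (k %/ b.+2)%N%:Z) * ((b.+1)%:Z - 2 * (k %% b.+2)%N%:Z)).

Lemma Rhat_diag a b : isdiag (Rhat qh a b) (dh a b).
Proof.
move=> i j; rewrite mxE /=.
by case: eqP => [->|_]; rewrite ?mul1r ?mul0r.
Qed.

Lemma fin n (M A B : 'M[K F]_n) T (f : nat -> T) dA dB :
  cons f f M -> isdiag A dA -> isdiag B dB ->
  (forall i j : 'I_n, f i = f j -> dA i * dB i = dA j * dB j) ->
  M *m A *m B = B *m A *m M /\ M *m B *m A = A *m B *m M.
Proof.
move=> cM dA' dB' h.
have E := diag_comm cM (diag_mul dA' dB') h.
split; first by rewrite -mulmxA E (diag_mulC dA' dB').
by rewrite -mulmxA (diag_mulC dB' dA') E.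
Qed.

End Fin.

Unset Implicit Arguments. Set Strict Implicit.

Theorem lemma5p4 (F : fieldType) (Fchar0 : [pchar F] =i pred0)
  (sq : F -> F) (sqE : forall x : F, sq x ^+ 2 = x)
  (qh : F) (qh_neq0 : qh != 0)
  (q_not_root_of_unity : forall n : nat, (0 < n)%N -> q qh ^+ n != 1)
  (a b c : nat) :
  let t := tK F in
  let R12 := leg12 a.+2 b.+2 c.+2 (Rgen qh sq a b t) in
  let R13 := leg13 a.+2 b.+2 c.+2 (Rgen qh sq a c t) in
  let R23 := leg23 a.+2 b.+2 c.+2 (Rgen qh sq b c t) in
  let H12 := leg12 a.+2 b.+2 c.+2 (Rhat qh a b) in
  let H13 := leg13 a.+2 b.+2 c.+2 (Rhat qh a c) in
  let H23 := leg23 a.+2 b.+2 c.+2 (Rhat qh b c) in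
  (R12 *m H13 *m H23 = H23 *m H13 *m R12) /\
  (R13 *m H23 *m H12 = H12 *m H23 *m R13) /\
  (R23 *m H12 *m H13 = H13 *m H12 *m R23) /\
  (R12 *m H23 *m H13 = H13 *m H23 *m R12) /\
  (R13 *m H12 *m H23 = H23 *m H12 *m R13) /\
  (R23 *m H13 *m H12 = H12 *m H13 *m R23).
Proof.
move=> t R12 R13 R23 H12 H13 H23.
set C1 := c1 b.+2 c.+2; set C2 := c2 b.+2 c.+2; set C3 := c3 b.+2 c.+2.
set x12 := fun k : nat => ((a.+1)%:Z - 2 * (C1 k)%:Z) * ((b.+1)%:Z - 2 * (C2 k)%:Z).
set x13 := fun k : nat => ((a.+1)%:Z - 2 * (C1 k)%:Z) * ((c.+1)%:Z - 2 * (C3 k)%:Z).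
set x23 := fun k : nat => ((b.+1)%:Z - 2 * (C2 k)%:Z) * ((c.+1)%:Z - 2 * (C3 k)%:Z).
have d12 : isdiag H12 (fun k => dd qh (x12 k)).
  move: (diag_tens (Rhat_diag qh (a:=a) (b:=b)) (diag_1 _ (n:=c.+2))) => hh.
  by apply: (diag_weaken hh) => i; rewrite mulr1.
have d23 : isdiag H23 (fun k => dd qh (x23 k)).
  move: (diag_cast (mulnA a.+2 b.+2 c.+2) (diag_tens (diag_1 _ (n:=a.+2)) (Rhat_diag qh (a:=b) (b:=c)))) => hh.
  by apply: (diag_weaken hh) => i; rewrite mul1r /dh ar2 ar3.
have d13 : isdiag H13 (fun k => dd qh (x13 k)).
  move: (diag_leg13 (diag_tens (Rhat_diag qh (a:=a) (b:=c)) (diag_1 _ (n:=b.+2)))) => hh.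
  apply: (diag_weaken hh) => i; rewrite mulr1 /dh.
  have s1 : (sig_nat b.+2 c.+2 i %/ b.+2 = C1 i * c.+2 + C3 i)%N.
    by rewrite /sig_nat divnMDl // [((_ %% b.+2) %/ b.+2)%N]divn_small ?ltn_mod // addn0.
  rewrite s1 divnMDl // [((_ %% c.+2) %/ c.+2)%N]divn_small ?ltn_mod // addn0.
  by rewrite modnMDl modn_small ?ltn_mod.
have cR12 := leg12_cons (n1 := a.+2) (n3 := c.+2) (Rgen_cons (qh:=qh) (sq:=sq) (a:=a) (b:=b) (t:=t)).
have cR13 := leg13_cons (n2 := b.+2) (Rgen_cons (qh:=qh) (sq:=sq) (a:=a) (b:=c) (t:=t)).
have cR23 := leg23_cons (n1 := a.+2) (Rgen_cons (qh:=qh) (sq:=sq) (a:=b) (b:=c) (t:=t)).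
have [|e1 e4] := fin cR12 d13 d23.
  move=> i j [E1 E2]; move: E1 E2; rewrite -/C1 -/C2 -/C3 => E1 E2; rewrite !ddM //.
  have G k : x13 k + x23 k = ((a.+1)%:Z + (b.+1)%:Z - 2 * (C1 k + C2 k)%N%:Z) * ((c.+1)%:Z - 2 * (C3 k)%:Z).
    by rewrite /x13 /x23 PoszD; ring.
  by rewrite !G E1 E2.
have [|e2 e5] := fin cR13 d23 d12.
  move=> i j [E1 E2]; move: E1 E2; rewrite -/C1 -/C2 -/C3 => E1 E2; rewrite !ddM //.
  have G k : x23 k + x12 k = ((b.+1)%:Z - 2 * (C2 k)%:Z) * ((a.+1)%:Z + (c.+1)%:Z - 2 * (C1 k + C3 k)%N%:Z).
    by rewrite /x12 /x23 PoszD; ring.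
  by rewrite !G E1 E2.
have [|e3 e6] := fin cR23 d12 d13.
  move=> i j [E1 E2]; move: E1 E2; rewrite -/C1 -/C2 -/C3 => E1 E2; rewrite !ddM //.
  have G k : x12 k + x13 k = ((a.+1)%:Z - 2 * (C1 k)%:Z) * ((b.+1)%:Z + (c.+1)%:Z - 2 * (C2 k + C3 k)%N%:Z).
    by rewrite /x12 /x13 PoszD; ring.
  by rewrite !G E1 E2.
by [].
Qed.
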